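(* Let $P=\bigcup_{k=1}^{\infty}\{2^{2k-1},2^{2k-1}+1,\dots,2^{2k}-1\}$ and let $\Sigma_P=\{x\in\{0,1\}^{\mathbb{Z}_+}: x_i=x_j=1\Rightarrow |i-j|\in P\cup\{0\}\}$ with the shift $\sigma_P:\Sigma_P\to\Sigma_P$, $(\sigma_P x)_i=x_{i+1}$. Then $(\Sigma_P,\sigma_P)$ is $(2,3)$-transitive but not $(1,2)$-transitive, i.e. $(\Sigma_P\times\Sigma_P,\sigma_P^2\times\sigma_P^3)$ is transitive while $(\Sigma_P\times\Sigma_P,\sigma_P\times\sigma_P^2)$ is not.
   Context: $\mathbb{Z}_+=\{0,1,2,\dots\}$; $\{0,1\}^{\mathbb{Z}_+}$ carries the product topology. A dynamical system $(Y,g)$ ($Y$ compact metric, $g$ continuous) is transitive if for all non-empty open $U,V\subset Y$ there is $n\in\mathbb{N}$ with $U\cap g^{-n}(V)\ne\emptyset$. For $\mathbf{a}=(a_1,\dots,a_r)\in\mathbb{N}^r$, $(X,f)$ is $\mathbf{a}$-transitive if $(X^r,f^{a_1}\times\dots\times f^{a_r})$ is transitive. *)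

(* Defs.v *)
From Stdlib Require Import Arith.

Definition bseq := nat -> bool.

Definition inP (m : nat) : Prop :=
  exists k : nat, 1 <= k /\ 2 ^ (2 * k - 1) <= m /\ m <= 2 ^ (2 * k) - 1.

(* Sigma_P : x_i = x_j = 1 -> |i - j| in P u {0}  (stated for i < j; i = j gives 0,
   and the condition is symmetric in i, j). *)
Definition SigmaP (x : bseq) : Prop :=
  forall i j : nat, i < j -> x i = true -> x j = true -> inP (j - i).

Definition shift (x : bseq) : bseq := fun i => x (i + 1).

Definition InSP2 (p : bseq * bseq) : Prop := SigmaP (fst p) /\ SigmaP (snd p).

Definition prodmap (a b : nat) (p : bseq * bseq) : bseq * bseq :=
  (Nat.iter a shift (fst p), Nat.iter b shift (snd p)).

(* Open subsets of Sigma_P x Sigma_P for the (relative) product topology: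
   U is contained in Sigma_P x Sigma_P and each point of U has a cylinder
   neighbourhood (agreement on the first N coordinates of both components)
   whose trace on Sigma_P x Sigma_P lies in U. *)
Definition openSP2 (U : bseq * bseq -> Prop) : Prop :=
  forall p, U p -> InSP2 p /\
    exists N : nat, forall q, InSP2 q ->
      (forall i, i < N -> fst q i = fst p i /\ snd q i = snd p i) -> U q.

Definition transitiveSP2 (g : bseq * bseq -> bseq * bseq) : Prop :=
  forall U V : bseq * bseq -> Prop,
    openSP2 U -> openSP2 V -> (exists p, U p) -> (exists p, V p) ->
    exists n : nat, 1 <= n /\ exists p, U p /\ V (Nat.iter n g p).

Definition a_transitive2 (a1 a2 : nat) : Prop := transitiveSP2 (prodmap a1 a2).

(* Main.v *)
Require Import Defs.
From Stdlib Require Import Arith Lia Bool.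

Lemma iter_shift_pt m x i : Nat.iter m shift x i = x (i + m).
Proof.
  revert i; induction m as [|m IH]; intro i; simpl.
  - now rewrite Nat.add_0_r.
  - unfold shift at 1. rewrite IH. f_equal. lia.
Qed.

Lemma iter_prod_pt a b n p i :
  fst (Nat.iter n (prodmap a b) p) i = fst p (i + a * n) /\
  snd (Nat.iter n (prodmap a b) p) i = snd p (i + b * n).
Proof.
  revert i; induction n as [|n IH]; intro i.
  - simpl. rewrite !Nat.mul_0_r, !Nat.add_0_r. split; reflexivity.
  - change (Nat.iter (S n) (prodmap a b) p) with (prodmap a b (Nat.iter n (prodmap a b) p)).
    set (z := Nat.iter n (prodmap a b) p) in *.
    unfold prodmap; cbn [fst snd]. rewrite !iter_shift_pt.
    destruct (IH (i + a)) as [H1 _]. destruct (IH (i + b)) as [_ H2].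
    rewrite H1, H2. split; f_equal; lia.
Qed.

Lemma SigmaP_ext x y : (forall i, x i = y i) -> SigmaP y -> SigmaP x.
Proof.
  intros E H i j hij hi hj. rewrite E in hi, hj. apply H; auto.
Qed.

Lemma SigmaP_shift m x : SigmaP x -> SigmaP (fun i => x (i + m)).
Proof.
  intros H i j hij hi hj.
  replace (j - i) with ((j + m) - (i + m)) by lia. apply H; auto; lia.
Qed.

Definition glue (w u : bseq) (N s : nat) : bseq := fun i =>
  if i <? N then w i else if (s <=? i) && (i <? s + N) then u (i - s) else false.

Lemma SigmaP_glue w u N s : SigmaP w -> SigmaP u -> N <= s ->
  (forall i j, i < N -> j < N -> inP (s + j - i)) -> SigmaP (glue w u N s).
Proof.
  intros Hw Hu Hs Hd i j hij. unfold glue.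
  destruct (Nat.ltb_spec i N); destruct (Nat.ltb_spec j N).
  - apply Hw; auto.
  - destruct (Nat.leb_spec s j); destruct (Nat.ltb_spec j (s + N)); simpl;
      intros _ ?; try discriminate.
    replace (j - i) with (s + (j - s) - i) by lia. apply Hd; lia.
  - lia.
  - destruct (Nat.leb_spec s i); destruct (Nat.ltb_spec i (s + N)); simpl;
      intros ?; try discriminate.
    destruct (Nat.leb_spec s j); destruct (Nat.ltb_spec j (s + N)); simpl;
      intros ?; try discriminate.
    replace (j - i) with ((j - s) - (i - s)) by lia. apply Hu; auto; lia.
Qed.

Lemma inP_not_double n : inP n -> inP (2 * n) -> False.
Proof.
  intros [k [hk [h1 h2]]] [j [hj [g1 g2]]].
  assert (E1 : 2 ^ (2 * k) = 2 * 2 ^ (2 * k - 1)).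
  { replace (2 * k) with (S (2 * k - 1)) at 1 by lia. reflexivity. }
  assert (E2 : 2 ^ (2 * j) = 2 * 2 ^ (2 * j - 1)).
  { replace (2 * j) with (S (2 * j - 1)) at 1 by lia. reflexivity. }
  pose proof (Nat.pow_nonzero 2 (2 * k - 1) ltac:(lia)).
  pose proof (Nat.pow_nonzero 2 (2 * j - 1) ltac:(lia)).
  assert (A : 2 ^ (2 * j - 1) < 2 ^ (S (2 * k))) by (rewrite Nat.pow_succ_r'; lia).
  assert (B : 2 ^ (2 * k) < 2 ^ (2 * j)) by lia.
  apply Nat.pow_lt_mono_r_iff in A; [|lia].
  apply Nat.pow_lt_mono_r_iff in B; [|lia]. lia.
Qed.

Definition e0 : bseq := fun i => Nat.eqb i 0.

Lemma SigmaP_e0 : SigmaP e0.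
Proof.
  intros i j hij hi hj. unfold e0 in *.
  apply Nat.eqb_eq in hi; apply Nat.eqb_eq in hj. lia.
Qed.

Lemma part2 : ~ a_transitive2 1 2.
Proof.
  intro T.
  set (U := fun p : bseq * bseq => InSP2 p /\ fst p 0 = true /\ snd p 0 = true).
  assert (OU : openSP2 U).
  { intros p Hp. split; [apply Hp|]. exists 1. intros q Hq Hag.
    destruct (Hag 0 ltac:(lia)) as [a b]. split; auto.
    destruct Hp as [_ [c d]]. split; congruence. }
  assert (NU : exists p, U p).
  { exists (e0, e0). split; [split; apply SigmaP_e0|]. split; reflexivity. }
  destruct (T U U OU OU NU NU) as [n [hn [p [[[H1 H2] [a b]] [_ [c d]]]]]].
  destruct (iter_prod_pt 1 2 n p 0) as [E1 E2].
  rewrite E1 in c. rewrite E2 in d. simpl in c, d.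
  apply (inP_not_double n).
  - replace n with (n - 0) by lia.
    apply H1; [lia|exact a|rewrite <- c; f_equal; lia].
  - replace (2 * n) with (2 * n - 0) by lia.
    apply H2; [lia|exact b|rewrite <- d; f_equal; lia].
Qed.

Lemma part1 : a_transitive2 2 3.
Proof.
  intros U V OU OV [p Up] [q Vq].
  destruct (OU p Up) as [[Sp1 Sp2] [N1 HU]].
  destruct (OV q Vq) as [[Sq1 Sq2] [N2 HV]].
  set (N := N1 + N2).
  set (M := 2 ^ (2 * N)).
  assert (NM : N < M).
  { unfold M. assert (N < 2 ^ N) by (apply Nat.pow_gt_lin_r; lia).
    assert (2 ^ N <= 2 ^ (2 * N)) by (apply Nat.pow_le_mono_r; lia). lia. }
  assert (P1 : 2 ^ (2 * (N + 2) - 1) = 8 * M).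
  { unfold M. replace (2 * (N + 2) - 1) with (2 * N + 3) by lia.
    rewrite Nat.pow_add_r. simpl. lia. }
  assert (P2 : 2 ^ (2 * (N + 2)) = 16 * M).
  { unfold M. replace (2 * (N + 2)) with (2 * N + 4) by lia.
    rewrite Nat.pow_add_r. simpl. lia. }
  assert (inPM : forall m, 8 * M <= m <= 16 * M - 1 -> inP m).
  { intros m hm. exists (N + 2). rewrite P1, P2. lia. }
  set (n := 5 * M).
  set (r := (glue (fst p) (fst q) N (2 * n), glue (snd p) (snd q) N (3 * n))).
  assert (Sr : InSP2 r).
  { split; simpl; apply SigmaP_glue; auto; try (unfold n; lia);
      intros i j hi hj; apply inPM; unfold n; lia. }
  exists n. split; [unfold n; lia|]. exists r. split.
  - apply HU; auto. intros i hi. simpl. unfold glue.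
    destruct (Nat.ltb_spec i N); [split; reflexivity| lia].
  - apply HV.
    + split.
      * apply (SigmaP_ext _ (fun i => fst r (i + 2 * n))).
        { intro i. apply (iter_prod_pt 2 3 n r i). }
        apply SigmaP_shift. apply Sr.
      * apply (SigmaP_ext _ (fun i => snd r (i + 3 * n))).
        { intro i. apply (iter_prod_pt 2 3 n r i). }
        apply SigmaP_shift. apply Sr.
    + intros i hi. destruct (iter_prod_pt 2 3 n r i) as [E1 E2].
      rewrite E1, E2. unfold r; cbn [fst snd]. unfold glue.
      destruct (Nat.ltb_spec (i + 2 * n) N); [unfold n in *; lia|].
      destruct (Nat.ltb_spec (i + 3 * n) N); [unfold n in *; lia|].
      destruct (Nat.leb_spec (2 * n) (i + 2 * n)); [|lia].
      destruct (Nat.ltb_spec (i + 2 * n) (2 * n + N)); [|unfold N in *; lia].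
      destruct (Nat.leb_spec (3 * n) (i + 3 * n)); [|lia].
      destruct (Nat.ltb_spec (i + 3 * n) (3 * n + N)); [|unfold N in *; lia].
      cbn [andb]. rewrite !Nat.add_sub. split; reflexivity.
Qed.

Theorem mainTheorem6 : a_transitive2 2 3 /\ ~ a_transitive2 1 2.
Proof. split; [apply part1 | apply part2]. Qed.
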